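(* Let $d\ge1$, let $y=(y_S)_{S\in\mathcal{V}_{n,2d}}$ be a vector over $\mathbb{F}_q$, and let $0\le e\le d-1$ with $r_e=r_{e+1}>0$. Let $f_1,\dots,f_m$ be polynomials $f_\ell(x)=\sum_{U\in\mathcal{V}_{n,2}}c_{\ell,U}x^U$ with $c_{\ell,U}\in\mathbb{F}_q$, and suppose $y$ satisfies $\sum_{U\in\mathcal{V}_{n,2}}c_{\ell,U}y_{U\cup W}=0$ for every $\ell\in[m]$ and every $W\in\mathcal{V}_{n,2d-2}$. Then there are linear maps $T_1,\dots,T_n:C_e\to C_e$ such that: (i) $T_i^2=T_i$ for every $i$; (ii) $T_iT_j=T_jT_i$ for all $i,j$; (iii) for every $\ell\in[m]$, $\sum_{U\in\mathcal{V}_{n,2}}c_{\ell,U}T_U=0$ as a linear map on $C_e$, where $T_U:=\prod_{i\in U}T_i$ and $T_\emptyset$ is the identity.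
   Context: $\mathbb{F}_q$ is a finite field. $\mathcal{V}_{n,j}:=\{S\subseteq\{1,\dots,n\}:0\le|S|\le j\}$ (including $\emptyset$); $x^U:=\prod_{i\in U}x_i$, $x^\emptyset=1$. For $0\le e\le d$, $H_e(y)$ is the matrix with rows and columns indexed by $\mathcal{V}_{n,e}$ and $(S,T)$ entry $y_{S\cup T}$; $r_e:=\operatorname{rank}H_e(y)$; $C_e$ is the column space of $H_e(y)$. *)

(* Defs.v *)
From HB Require Import structures.
From mathcomp Require Import all_boot all_order all_algebra.
Set Implicit Arguments. Unset Strict Implicit. Unset Printing Implicit Defensive.
Import GRing.Theory.
Local Open Scope ring_scope.

Definition Vset (n j : nat) : {set {set 'I_n}} := [set S : {set 'I_n} | (#|S| <= j)%N].

Section Hankel.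
Variables (F : fieldType) (n : nat) (y : {set 'I_n} -> F).

Definition Hmx (e : nat) : 'M[F]_(#|Vset n e|) :=
  \matrix_(i, j) y (enum_val i :|: enum_val j).

Definition rk (e : nat) : nat := \rank (Hmx e).

Definition Csp (e : nat) : {vspace 'cV[F]_(#|Vset n e|)} :=
  <<[seq col j (Hmx e) | j <- enum 'I_(#|Vset n e|)]>>%VS.
End Hankel.

Definition TU (F : fieldType) (vT : vectType F) (n : nat)
  (T : 'I_n -> 'End(vT)) (U : {set 'I_n}) : 'End(vT) :=
  foldr (fun i f => (T i \o f)%VF) \1%VF (enum U).

(* Main.v *)
Require Import Defs.
From HB Require Import structures.
From mathcomp Require Import all_boot all_order all_algebra.
From mathcomp Require Import zify.
Set Implicit Arguments. Unset Strict Implicit. Unset Printing Implicit Defensive.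
Import GRing.Theory.
Local Open Scope ring_scope.

Lemma colsubE' (R : pzRingType) m n k (g : 'I_k -> 'I_n) (A : 'M[R]_(m, n)) :
  colsub g A = A *m colsub g 1%:M.
Proof.
apply/matrixP=> i j; rewrite !mxE (bigD1 (g j)) //= !mxE eqxx mulr1 big1 ?addr0 //.
by move=> k0 nk; rewrite !mxE (negbTE nk) mulr0.
Qed.

Lemma card_setU_le (T : finType) (A B : {set T}) : (#|A :|: B| <= #|A| + #|B|)%N.
Proof. exact: (leq_card_setU A B).1. Qed.

Section Main.
Variables (F : fieldType) (n e : nat) (y : {set 'I_n} -> F).
Hypothesis hrk : rk y e = rk y e.+1.

Definition ev (j : nat) (s : 'I_#|Vset n j|) : {set 'I_n} := enum_val s.

Lemma inV j (X : {set 'I_n}) : (X \in Vset n j) = (#|X| <= j)%N.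
Proof. by rewrite inE. Qed.

Lemma evP j s : (#|@ev j s| <= j)%N.
Proof. by rewrite -inV; apply: enum_valP. Qed.

Local Notation N0 := #|Vset n e|.
Local Notation N1 := #|Vset n e.+1|.

Lemma set0V1 : set0 \in Vset n e.+1.
Proof. by rewrite inV cards0. Qed.

Definition rk1 (X : {set 'I_n}) : 'I_N1 := enum_rank_in set0V1 X.

Lemma rk1K (X : {set 'I_n}) : (#|X| <= e.+1)%N -> ev (rk1 X) = X.
Proof. by move=> h; rewrite /ev /rk1 enum_rankK_in // inV. Qed.

Definition f0 (s : 'I_N0) : 'I_N1 := rk1 (ev s).
Definition sh (i : 'I_n) (s : 'I_N0) : 'I_N1 := rk1 (i |: ev s).
Definition gX (X : {set 'I_n}) (t : 'I_N0) : 'I_N1 := rk1 (X :|: ev t).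

Lemma f0K s : ev (f0 s) = ev s.
Proof. by rewrite rk1K // (leq_trans (evP s)). Qed.

Lemma shK i s : ev (sh i s) = i |: ev s.
Proof. by rewrite rk1K // cardsU1 (leq_add (leq_b1 _) (evP s)). Qed.

Lemma gXK (X : {set 'I_n}) t : (#|X| <= 1)%N -> ev (gX X t) = X :|: ev t.
Proof.
move=> hX; rewrite rk1K //; apply: leq_trans (card_setU_le _ _) _.
by rewrite -add1n leq_add // evP.
Qed.

Definition M := Hmx y e.+1.
Definition H := Hmx y e.
Definition R1 := rowsub f0 M.
Definition Nm (X : {set 'I_n}) : 'M[F]_N0 :=
  \matrix_(a, t) y (ev a :|: X :|: ev t).
Definition P := (pinvmx H^T)^T.

Lemma HE : H = R1 *m colsub f0 1%:M.
Proof.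
by rewrite -colsubE'; apply/matrixP=> a t; rewrite !mxE -!/(ev _) !f0K.
Qed.

Lemma R1E : R1 = rowsub f0 1%:M *m M.
Proof. exact: rowsubE. Qed.

Lemma rankR1 : \rank R1 = \rank M.
Proof.
apply/eqP; rewrite eqn_leq {1}R1E mxrankM_maxr /=.
have := mxrankM_maxl R1 (colsub f0 1%:M); rewrite -HE.
by rewrite /H -/(rk y e) hrk.
Qed.

Lemma MY : M = (M *m pinvmx R1) *m R1.
Proof.
have s1 : (R1 <= M)%MS by rewrite R1E submxMl.
have : (M <= R1)%MS by rewrite -(mxrank_leqif_sup s1).2 rankR1.
by move/mulmxKpV.
Qed.

Lemma rankRH : \rank R1 = \rank H.
Proof. by rewrite rankR1 /H /M -/(rk y e) -/(rk y e.+1) hrk. Qed.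

Definition Z := (R1^T *m pinvmx H^T)^T.

Lemma R1Z : R1 = H *m Z.
Proof.
have s1 : (H^T <= R1^T)%MS by rewrite HE trmx_mul submxMl.
have : (R1^T <= H^T)%MS.
  by rewrite -(mxrank_leqif_sup s1).2 !mxrank_tr rankRH.
by move/mulmxKpV=> h; apply: trmx_inj; rewrite trmx_mul /Z trmxK h.
Qed.

Lemma kerR1 (z : 'cV[F]_N1) : R1 *m z = 0 -> M *m z = 0.
Proof. by move=> h; rewrite MY -mulmxA h mulmx0. Qed.

Lemma HP (w : 'cV[F]_N0) v : v = H *m w -> H *m (P *m v) = v.
Proof.
move=> ->; have s : ((H *m w)^T <= H^T)%MS by rewrite trmx_mul submxMl.
apply: trmx_inj; rewrite [LHS]trmx_mul [(P *m _)^T]trmx_mul /P trmxK.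
exact: mulmxKpV s.
Qed.

Lemma NmR1 (X : {set 'I_n}) : (#|X| <= 1)%N -> Nm X = R1 *m colsub (gX X) 1%:M.
Proof.
move=> hX; rewrite -colsubE'; apply/matrixP=> a t; rewrite !mxE -!/(ev _).
by rewrite f0K gXK // setUA.
Qed.

Lemma Nm1 i : Nm [set i] = rowsub (sh i) M *m colsub f0 1%:M.
Proof.
rewrite -colsubE'; apply/matrixP=> a t; rewrite !mxE -!/(ev _).
by rewrite shK f0K (setUC (ev a)).
Qed.

Lemma step i (X : {set 'I_n}) (w : 'cV[F]_N0) : (#|X| <= 1)%N ->
  Nm [set i] *m P *m (Nm X *m w) = Nm (i |: X) *m w.
Proof.
move=> hX; set x := colsub (gX X) 1%:M *m w.
have ex : Nm X *m w = R1 *m x by rewrite NmR1 // mulmxA.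
have hv : Nm X *m w = H *m (Z *m x) by rewrite ex R1Z mulmxA.
have hw := HP hv.
set w' := P *m (Nm X *m w) in hw *.
rewrite -mulmxA -/w' Nm1 -mulmxA.
have : R1 *m (colsub f0 1%:M *m w' - x) = 0.
  by rewrite mulmxBr mulmxA -HE hw ex subrr.
move/kerR1; rewrite mulmxBr => /eqP; rewrite subr_eq0 => /eqP.
rewrite rowsubE -!mulmxA => ->; rewrite /x !mulmxA -rowsubE -colsubE'.
congr (_ *m _); apply/matrixP=> a t; rewrite !mxE -!/(ev _).
by rewrite shK gXK // setUA -setUA [ev a :|: _]setUC -setUA.
Qed.

Lemma memC (w : 'cV[F]_N0) : H *m w \in Csp y e.
Proof.
have -> : H *m w = \sum_j w j 0 *: col j H.
  apply/matrixP=> a b; rewrite !mxE summxE; apply: eq_bigr => j _.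
  by rewrite !mxE (ord1 b) mulrC.
apply: memv_suml => j _; apply: memvZ; apply: memv_span.
by apply: map_f; rewrite mem_enum.
Qed.

Lemma memCP v : v \in Csp y e -> exists w, v = H *m w.
Proof.
move=> hv.
have : (Csp y e <= limg (linfun (mulmx H)))%VS.
  apply/span_subvP => u /mapP [j _ ->]; rewrite colE.
  by rewrite -(lfunE (mulmx H)); apply: memv_img; apply: memvf.
move/subvP/(_ v hv)/memv_imgP => [u _ ->]; exists u; by rewrite lfunE.
Qed.

Lemma memNm (X : {set 'I_n}) w : (#|X| <= 1)%N -> Nm X *m w \in Csp y e.
Proof. by move=> hX; rewrite NmR1 // R1Z -!mulmxA memC. Qed.

Definition Amx (i : 'I_n) := Nm [set i] *m P.

Definition Top (i : 'I_n) : 'End(subvs_of (Csp y e)) :=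
  (linfun (vsproj (Csp y e)) \o linfun (mulmx (Amx i)) \o linfun vsval)%VF.

Lemma TopE i x : vsval (Top i x) = Amx i *m vsval x.
Proof.
rewrite /Top !comp_lfunE !lfunE /= vsprojK //.
by rewrite /Amx -mulmxA memNm // cards1.
Qed.

Lemma NmH : Nm set0 = H.
Proof. by apply/matrixP=> a t; rewrite !mxE setU0. Qed.

Lemma Topstep i (X : {set 'I_n}) x w : (#|X| <= 1)%N -> vsval x = Nm X *m w ->
  vsval (Top i x) = Nm (i |: X) *m w.
Proof. by move=> hX hx; rewrite TopE hx step. Qed.

Lemma foldE (s : seq 'I_n) x w : (size s <= 2)%N -> vsval x = H *m w ->
  vsval (foldr (fun i f => (Top i \o f)%VF) \1%VF s x) = Nm [set z in s] *m w.
Proof.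
move=> hs hx; elim: s hs => [|i s IH] /= hs.
  by rewrite id_lfunE hx -NmH; congr (Nm _ *m _); apply/setP=> z; rewrite !inE.
rewrite comp_lfunE (@Topstep i [set z in s] _ w) ?IH //.
- by congr (Nm _ *m _); apply/setP=> z; rewrite !inE.
- by rewrite cardsE (leq_trans (card_size _)).
- by rewrite (leq_trans _ hs).
Qed.

Lemma T1 i x w : vsval x = H *m w -> vsval (Top i x) = Nm [set i] *m w.
Proof.
move=> hx; rewrite (@Topstep i set0 _ w) ?cards0 ?setU0 //.
by rewrite NmH.
Qed.

Lemma TT i j x w : vsval x = H *m w ->
  vsval (Top i (Top j x)) = Nm (i |: [set j]) *m w.
Proof.
by move=> hx; rewrite (@Topstep i [set j] _ w) ?cards1 // (T1 j hx).
Qed.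

Lemma sumzero (c' : {set 'I_n} -> F) (w : 'cV[F]_N0) :
  (forall W, W \in Vset n (2 * e) -> \sum_(U in Vset n 2) c' U * y (U :|: W) = 0) ->
  \sum_(U in Vset n 2) c' U *: (Nm U *m w) = 0.
Proof.
move=> hc; apply/matrixP => a b; rewrite summxE mxE.
under eq_bigr => U _ do rewrite mxE mxE big_distrr.
rewrite exchange_big /=; apply: big1 => t _.
under eq_bigr => U _ do rewrite mxE mulrA.
rewrite -big_distrl /=.
have -> : \sum_(U in Vset n 2) c' U * y (ev a :|: U :|: ev t) =
          \sum_(U in Vset n 2) c' U * y (U :|: (ev a :|: ev t)).
  by apply: eq_bigr => U _; rewrite (setUC (ev a)) setUA.
rewrite hc ?mul0r // inV; apply: leq_trans (card_setU_le _ _) _.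
by rewrite mul2n -addnn leq_add // evP.
Qed.

End Main.

Theorem lemma4p5 (F : finFieldType) (n d e m : nat)
  (y : {set 'I_n} -> F) (c : 'I_m -> {set 'I_n} -> F) :
  (1 <= d)%N -> (e <= d - 1)%N ->
  rk y e = rk y e.+1 -> (0 < rk y e)%N ->
  (forall (l : 'I_m) (W : {set 'I_n}), W \in Vset n (2 * d - 2) ->
     \sum_(U in Vset n 2) c l U * y (U :|: W) = 0) ->
  exists T : 'I_n -> 'End(subvs_of (Csp y e)),
    [/\ forall i, (T i \o T i)%VF = T i,
        forall i j, (T i \o T j)%VF = (T j \o T i)%VF
      & forall l : 'I_m, \sum_(U in Vset n 2) c l U *: TU T U = 0].
Proof.
move=> hd hed hrk _ hc; exists (@Top F n e y); split.
- move=> i; apply/lfunP => x; apply: subvs_inj; rewrite comp_lfunE.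
  have [w hw] := memCP (subvsP x).
  by rewrite (TT hrk _ _ hw) (T1 hrk _ hw) setUid.
- move=> i j; apply/lfunP => x; apply: subvs_inj; rewrite (comp_lfunE (Top e y i)) (comp_lfunE (Top e y j)).
  have [w hw] := memCP (subvsP x).
  by rewrite (TT hrk _ _ hw) (TT hrk _ _ hw) setUC.
- move=> l; apply/lfunP => x; rewrite sum_lfunE zero_lfunE; apply: subvs_inj.
  have [w hw] := memCP (subvsP x).
  rewrite linear_sum linear0.
  have hT : forall U, U \in Vset n 2 -> vsval (TU (Top e y) U x) = Nm e y U *m w.
    move=> U hU; rewrite /TU (foldE hrk (s:=enum U) (x:=x) (w:=w)) ?set_enum //.
    by rewrite -cardE -inV.
  under eq_bigr => U hU do rewrite scale_lfunE linearZ /= hT //.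
  apply: sumzero => W hW; apply: hc; rewrite inV.
  move: hW; rewrite inV; lia.
Qed.
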